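(* Consider a single-machine instance as defined in the context in which all jobs have the same weight ($w_j=w_k$ for all $j,k\in J$). Then the schedule produced by the WSPT rule, i.e. any schedule that orders the jobs in nondecreasing order of $p_j/w_j$ (equivalently, nondecreasing processing time), is optimal.
   Context: An instance consists of a finite set $J$ of jobs, each job $j$ having a processing time $p_j>0$ and a weight $w_j>0$, a common deadline $d\ge 0$, and a single machine. A schedule is a sequence $\pi$ containing every job of $J$ exactly once, processed consecutively without idle time starting at time $0$: the start time of job $j$ is $S_j=\sum_{k \text{ before } j \text{ in } \pi} p_k$ and its completion time is $C_j=S_j+p_j$. Let $J_{\mathrm{pri}}(\pi)=\{j : S_j<d\}$ and $J_{\mathrm{late}}(\pi)=\{j: S_j\ge d\}$. The cost of $\pi$ is $$\phi(\pi)=\sum_{j\in J_{\mathrm{pri}}(\pi)} w_j p_j+\sum_{j\in J_{\mathrm{late}}(\pi)} w_j\,(C_j-d),$$ and $\pi$ is optimal if $\phi(\pi)$ is minimal over all schedules of $J$. (This models total weighted flowtime minimization where each release date $r_j\le d$ is a decision variable.) *)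

(* Defs.v *)
From mathcomp Require Import all_boot all_order all_algebra.
Set Implicit Arguments. Unset Strict Implicit. Unset Printing Implicit Defensive.
Import Order.TTheory GRing.Theory Num.Theory.
Local Open Scope ring_scope.

Section Sched.
Variables (R : realFieldType) (J : finType).

Definition is_schedule (s : seq J) : Prop := uniq s /\ forall j : J, j \in s.

Definition start_time (p : J -> R) (s : seq J) (j : J) : R :=
  \sum_(k <- take (index j s) s) p k.

Definition completion_time (p : J -> R) (s : seq J) (j : J) : R :=
  start_time p s j + p j.

Definition cost (p w : J -> R) (d : R) (s : seq J) : R :=
  \sum_(j : J) (if start_time p s j < d then w j * p j
                else w j * (completion_time p s j - d)).

Definition optimal (p w : J -> R) (d : R) (s : seq J) : Prop :=
  is_schedule s /\ forall s' : seq J, is_schedule s' -> cost p w d s <= cost p w d s'.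

Definition wspt (p w : J -> R) (s : seq J) : Prop :=
  sorted (fun j k => p j / w j <= p k / w k) s.
End Sched.

(* Main.v *)
Require Import Defs.
From mathcomp Require Import all_boot all_order all_algebra.
Import Order.TTheory GRing.Theory Num.Theory.
Local Open Scope ring_scope.

Section Aux.
Variables (R : realFieldType) (J : finType).

Lemma sum_swap_le (p : J -> R) (X Y : {set J}) :
  #|X| = #|Y| -> (forall x y, x \in X -> y \in Y -> p x <= p y) ->
  \sum_(x in X) p x <= \sum_(y in Y) p y.
Proof.
move=> hc hxy.
have e1 : \sum_(x in X) \sum_(y in Y) p x = (\sum_(x in X) p x) *+ #|Y|.
  by rewrite -sumrMnl; apply: eq_bigr => x _; rewrite sumr_const.
have e2 : \sum_(x in X) \sum_(y in Y) p y = (\sum_(y in Y) p y) *+ #|X|.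
  by rewrite sumr_const.
have : \sum_(x in X) \sum_(y in Y) p x <= \sum_(x in X) \sum_(y in Y) p y.
  by apply: ler_sum => x hx; apply: ler_sum => y hy; apply: hxy.
rewrite e1 e2 hc lerMn2r; case/orP => // /eqP h0.
have hX : #|X| = 0%N by rewrite hc.
have /eqP := h0; have /eqP := hX; rewrite !cards_eq0 => /eqP -> /eqP ->.
by rewrite !big_set0.
Qed.

Definition pre (p : J -> R) (s : seq J) (i : nat) := \sum_(k <- take i s) p k.

Lemma pre_le (p : J -> R) (r : rel J) (s t : seq J) (i : nat) :
  transitive r -> (forall x y, r x y -> p x <= p y) ->
  uniq s -> uniq t -> s =i t -> size s = size t -> sorted r s ->
  pre p s i <= pre p t i.
Proof.
move=> rt rp us ut st sz ss.
rewrite /pre !big_uniq ?take_uniq //.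
set A := [set x in take i s]; set B := [set x in take i t].
have -> : \sum_(i0 in take i s) p i0 = \sum_(x in A) p x.
  by apply: eq_bigl => x; rewrite inE.
have -> : \sum_(i0 in take i t) p i0 = \sum_(x in B) p x.
  by apply: eq_bigl => x; rewrite inE.
rewrite (big_setID B) [X in _ <= X](big_setID A) /= setIC lerD2l.
apply: sum_swap_le.
  rewrite !cardsD setIC; congr (_ - _)%N.
  rewrite !cardsE !(card_uniqP _) ?take_uniq // !size_take sz //.
move=> x y; rewrite !inE => /andP[hxB hxA] /andP[hyA hyB].
apply: rp; have ys : y \in s by rewrite st (mem_take hyB).
have xs : y \in s := ys.
apply: (sorted_ltn_index rt ss) => //; first exact: mem_take hxA.
rewrite in_take // -leqNgt in hyA.
exact: leq_trans (index_ltn hxA) hyA.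
Qed.

End Aux.
Arguments pre {R J} p s i.

Theorem theorem2 (R : realFieldType) (J : finType) (p w : J -> R) (d : R)
  (hp : forall j, 0 < p j) (hw : forall j, 0 < w j) (hd : 0 <= d)
  (hweq : forall j k, w j = w k)
  (s : seq J) (hs : is_schedule s) (hwspt : wspt p w s) :
  optimal p w d s.
Proof.
split => // t ht.
case: (pickP (@predT J)) => [x0 _|hJ]; last first.
  by rewrite /cost !big_pred0.
pose g (x : R) := if x < d then 0 else x - d.
have cost_eq : forall u : seq J, is_schedule u -> cost p w d u =
    \sum_(j : J) w j * p j + w x0 * \sum_(0 <= i < size u) g (pre p u i).
  move=> u [uu hu]; rewrite /cost.
  rewrite (eq_bigr (fun j => w j * p j + w x0 * g (start_time p u j))); last first.
    move=> j _; rewrite /g /completion_time (hweq j x0).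
    by case: ifP => _; rewrite ?mulr0 ?addr0 // -mulrDr addrAC addrC.
  rewrite big_split /=; congr (_ + _); rewrite -mulr_sumr; congr (_ * _).
  have pe : perm_eq (index_enum J) u.
    by apply: uniq_perm => //; [exact: index_enum_uniq | move=> x; rewrite mem_index_enum hu].
  rewrite (perm_big _ pe) (big_nth x0); apply: eq_big_nat => i /andP[_ hi].
  by rewrite /start_time index_uniq.
have szJ : forall u : seq J, is_schedule u -> size u = #|J|.
  move=> u [uu hu].
  rewrite -(card_uniqP uu).
  apply: eq_card => x.
  by rewrite hu inE.
rewrite !cost_eq // (szJ s hs) (szJ t ht) lerD2l ler_pM2l // ler_sum_nat // => i _.
have hle : pre p s i <= pre p t i.
  apply: (@pre_le R J p (fun j k => p j / w j <= p k / w k)) => //.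
  - by move=> a b c; apply: le_trans.
  - by move=> x y; rewrite (hweq y x) ler_pM2r // invr_gt0.
  - by case: hs.
  - by case: ht.
  - by move=> x; case: hs => _ ->; case: ht => _ ->.
  - by rewrite (szJ s hs) (szJ t ht).
rewrite /g; case: ifP => h1; case: ifP => h2 //.
- by rewrite subr_ge0 leNgt h2.
- by move: h1; rewrite (le_lt_trans hle h2).
- by rewrite lerBlDr subrK.

Qed.
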